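(* In the setting below, for any $\varepsilon>0$ and $\theta\in\mathbb{R}$, PrivTree$(D,\lambda,\theta,\delta)$ satisfies $\varepsilon$-differential privacy if $\lambda\ge\frac{2\beta-1}{\beta-1}\cdot\frac{1}{\varepsilon}$ and $\delta=\lambda\ln\beta$, where $\beta\ge 2$ is the fanout of the splitting scheme.
   Context: $\mathrm{Lap}(\lambda)$ is the Laplace distribution with density $\frac{1}{2\lambda}e^{-|y|/\lambda}$. Setting: $\Omega$ is a domain and there is a fixed, data-independent hierarchical splitting scheme of fanout $\beta\ge 2$: an infinite rooted tree of candidate nodes in which every node $v$ has exactly $\beta$ children, each node $v$ carries a sub-domain $\mathrm{dom}(v)\subseteq\Omega$, the root $v_1$ has $\mathrm{dom}(v_1)=\Omega$, and the sub-domains of the $\beta$ children of $v$ partition $\mathrm{dom}(v)$. $\mathrm{depth}(v)$ is the hop distance from $v$ to the root. A dataset $D$ is a finite multiset of points of $\Omega$; $c(v)$ is the number of points of $D$ lying in $\mathrm{dom}(v)$. PrivTree$(D,\lambda,\theta,\delta)$: start with the tree consisting only of the root, marked unvisited. While some node $v$ is unvisited: mark $v$ visited; set $b(v)=\max\{\theta-\delta,\ c(v)-\mathrm{depth}(v)\cdot\delta\}$; set $\hat b(v)=b(v)+\eta_v$ with $\eta_v\sim\mathrm{Lap}(\lambda)$ fresh and independent; if $\hat b(v)>\theta$, add all $\beta$ children of $v$ as unvisited nodes. The output is the resulting tree (nodes with sub-domains), with all counts removed. Two datasets are neighboring if one is obtained from the other by inserting one point. An algorithm $\mathcal{A}$ is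 $\varepsilon$-differentially private if for all neighboring $D,D'$ and every possible output $O$, $\ln\big(\Pr[\mathcal{A}(D)=O]/\Pr[\mathcal{A}(D')=O]\big)\le\varepsilon$. *)

(* Defs.v *)
From Stdlib Require Import Reals Lra List Permutation.
Import ListNotations.
Open Scope R_scope.

(** Candidate nodes of the infinite beta-ary splitting tree are paths from the
    root: a node is a list of child indices (each < beta); the root is [],
    the j-th child of v is v ++ [j], and depth v = length v. *)
Definition node := list nat.

Definition child (v : node) (j : nat) : node := v ++ [j].

Definition depth (v : node) : nat := length v.

Definition splitting_scheme (Omega : Type) (beta : nat) (dom : node -> Omega -> bool) : Prop :=
  (forall x, dom [] x = true) /\
  (forall v j x, (j < beta)%nat -> dom (child v j) x = true -> dom v x = true) /\
  (forall v x, dom v x = true ->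
     exists j, (j < beta)%nat /\ dom (child v j) x = true /\
       forall k, (k < beta)%nat -> dom (child v k) x = true -> k = j).

(** A dataset is a finite multiset of points, represented by a list. *)
Definition count_in {Omega : Type} (dom : node -> Omega -> bool) (D : list Omega) (v : node) : nat :=
  length (filter (dom v) D).

Definition insert_one {Omega : Type} (D D' : list Omega) : Prop :=
  exists x, Permutation D' (x :: D).

Definition neighboring {Omega : Type} (D D' : list Omega) : Prop :=
  insert_one D D' \/ insert_one D' D.

(** Pr[ b + eta > theta ] for eta ~ Lap(lambda) (density e^{-|y|/lambda}/(2 lambda)):
    the Laplace survival function evaluated at theta - b. *)
Definition lap_survival (lam t : R) : R :=
  if Rle_dec 0 t then / 2 * exp (- t / lam) else 1 - / 2 * exp (t / lam).

Definition split_prob (lam theta b : R) : R := lap_survival lam (theta - b).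

Definition biased_count {Omega : Type} (dom : node -> Omega -> bool) (D : list Omega)
  (theta delta : R) (v : node) : R :=
  Rmax (theta - delta) (INR (count_in dom D v) - INR (depth v) * delta).

(** A possible output of PrivTree: a finite tree, described by the (finite,
    duplicate-free) list I of its internal (= split) nodes. *)
Definition valid_output (beta : nat) (I : list node) : Prop :=
  NoDup I /\
  forall v, In v I -> v = [] \/ exists u j, In u I /\ (j < beta)%nat /\ v = child u j.

Definition in_nodes (v : node) (I : list node) : bool :=
  if in_dec (list_eq_dec Nat.eq_dec) v I then true else false.

Definition leaves (beta : nat) (I : list node) : list node :=
  match I with
  | [] => [ [] ]
  | _ => filter (fun w => negb (in_nodes w I))
            (flat_map (fun v => map (child v) (seq 0 beta)) I)
  end.

Definition prodR (l : list R) : R := fold_right Rmult 1 l.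

(** Pr[ PrivTree(D, lambda, theta, delta) = O ] for the output O with internal
    nodes I: the algorithm outputs O iff exactly the nodes of O are visited,
    every internal node of O has its noisy count exceed theta and every leaf
    of O does not; the noises are independent, so this is the product. *)
Definition privtree_prob {Omega : Type} (beta : nat) (dom : node -> Omega -> bool)
  (D : list Omega) (lam theta delta : R) (I : list node) : R :=
  prodR (map (fun v => split_prob lam theta (biased_count dom D theta delta v)) I) *
  prodR (map (fun v => 1 - split_prob lam theta (biased_count dom D theta delta v))
             (leaves beta I)).

Definition privtree_DP {Omega : Type} (beta : nat) (dom : node -> Omega -> bool)
  (lam theta delta eps : R) : Prop :=
  forall (D D' : list Omega), neighboring D D' ->
  forall I, valid_output beta I ->
    ln (privtree_prob beta dom D lam theta delta I /
        privtree_prob beta dom D' lam theta delta I) <= eps.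

(* Main.v *)
Require Import Defs.
From Stdlib Require Import Reals Lra Lia List Permutation.
Import ListNotations.
Open Scope R_scope.

Lemma exp_le_mono x y : x <= y -> exp x <= exp y.
Proof. intros H. destruct (Rle_lt_or_eq_dec _ _ H) as [H1|H1].
 - left. apply exp_increasing; auto. - subst; lra. Qed.

Lemma ln_le_mono x y : 0 < x -> x <= y -> ln x <= ln y.
Proof. intros H0 H. destruct (Rle_lt_or_eq_dec _ _ H) as [H1|H1].
 - left. apply ln_increasing; auto. - subst; lra. Qed.

Lemma ln_le_sub1 x : 0 < x -> ln x <= x - 1.
Proof. intros H. pose proof (exp_ineq1_le (ln x)). rewrite exp_ln in H0; lra. Qed.

Lemma div_le0 t lam : 0 < lam -> t <= 0 -> t / lam <= 0.
Proof. intros. assert (0 < / lam) by (apply Rinv_0_lt_compat; lra). unfold Rdiv. nra. Qed.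

Lemma div_ge0 t lam : 0 < lam -> 0 <= t -> 0 <= t / lam.
Proof. intros. assert (0 < / lam) by (apply Rinv_0_lt_compat; lra). unfold Rdiv. nra. Qed.

Lemma lap_nonneg lam t : 0 <= t -> lap_survival lam t = /2 * exp (-t/lam).
Proof. intros. unfold lap_survival. destruct (Rle_dec 0 t); [reflexivity|lra]. Qed.

Lemma lap_nonpos lam t : t <= 0 -> lap_survival lam t = 1 - /2 * exp (t/lam).
Proof. intros. unfold lap_survival. destruct (Rle_dec 0 t).
 - assert (t = 0) by lra. subst. replace (-0/lam) with 0 by (unfold Rdiv; ring).
   replace (0/lam) with 0 by (unfold Rdiv; ring). rewrite exp_0. lra.
 - reflexivity. Qed.

Lemma exp_le1 x : x <= 0 -> exp x <= 1.
Proof. intros. rewrite <- exp_0. apply exp_le_mono; auto. Qed.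

Lemma lap_bounds lam t : 0 < lam -> 0 < lap_survival lam t < 1.
Proof. intros Hl. destruct (Rle_dec 0 t).
 - rewrite lap_nonneg by auto. pose proof (exp_pos (-t/lam)).
   pose proof (exp_le1 (-t/lam) (div_le0 (-t) lam Hl ltac:(lra))). lra.
 - rewrite lap_nonpos by lra. pose proof (exp_pos (t/lam)).
   pose proof (exp_le1 (t/lam) (div_le0 t lam Hl ltac:(lra))). lra. Qed.

Lemma lap_sym lam t : 1 - lap_survival lam t = lap_survival lam (- t).
Proof. destruct (Rle_dec 0 t).
 - rewrite lap_nonneg by auto. rewrite lap_nonpos by lra.
   replace (-t/lam) with (- t / lam) by reflexivity. lra.
 - rewrite lap_nonpos by lra. rewrite lap_nonneg by lra.
   replace (- - t / lam) with (t/lam) by (unfold Rdiv; ring). lra. Qed.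

Lemma lap_mono lam s t : 0 < lam -> s <= t -> lap_survival lam t <= lap_survival lam s.
Proof. intros Hl H. destruct (Rle_dec 0 s).
 - rewrite !lap_nonneg by lra. apply Rmult_le_compat_l; [lra|]. apply exp_le_mono.
   unfold Rdiv. assert (0 < / lam) by (apply Rinv_0_lt_compat; lra). nra.
 - destruct (Rle_dec t 0).
   + rewrite !lap_nonpos by lra. assert (exp (s/lam) <= exp (t/lam)); [|lra]. apply exp_le_mono.
     unfold Rdiv. assert (0 < / lam) by (apply Rinv_0_lt_compat; lra). nra.
   + rewrite lap_nonneg by lra. rewrite lap_nonpos by lra.
     pose proof (exp_le1 (-t/lam) (div_le0 (-t) lam Hl ltac:(lra))).
     pose proof (exp_le1 (s/lam) (div_le0 s lam Hl ltac:(lra))). lra. Qed.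

Lemma lap_slope lam s t : 0 < lam -> s <= t ->
  lap_survival lam s <= lap_survival lam t * exp ((t - s) / lam).
Proof. intros Hl H.
  set (A := exp (s/lam)). set (B := exp (t/lam)).
  assert (HA : 0 < A) by apply exp_pos. assert (HB : 0 < B) by apply exp_pos.
  assert (E1 : exp ((t-s)/lam) = B * / A).
  { unfold A, B. rewrite <- exp_Ropp, <- exp_plus. f_equal. unfold Rdiv; ring. }
  assert (AB : A <= B). { apply exp_le_mono. unfold Rdiv.
     assert (0 < / lam) by (apply Rinv_0_lt_compat; lra). nra. }
  rewrite E1.
  destruct (Rle_dec 0 s).
  - rewrite !lap_nonneg by lra.
    replace (-s/lam) with (-(s/lam)) by (unfold Rdiv; ring).
    replace (-t/lam) with (-(t/lam)) by (unfold Rdiv; ring).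
    rewrite !exp_Ropp. fold A B. right. field. split; lra.
  - destruct (Rle_dec t 0).
    + rewrite !lap_nonpos by lra. fold A B.
      assert (B <= 1) by (apply exp_le1; apply div_le0; lra).
      replace (1 - /2 * A) with (((1 - /2*A)*A) * /A) by (field; lra).
      replace ((1 - / 2 * B) * (B * / A)) with (((1 - /2*B)*B) * /A) by (field; lra).
      apply Rmult_le_compat_r. left; apply Rinv_0_lt_compat; lra.
      assert (0 <= (B - A) * (2 - A - B)) by (apply Rmult_le_pos; lra). nra.
    + rewrite (lap_nonneg lam t) by lra. rewrite (lap_nonpos lam s) by lra. fold A.
      replace (-t/lam) with (-(t/lam)) by (unfold Rdiv; ring). rewrite exp_Ropp. fold B.
      replace (/ 2 * / B * (B * / A)) with ((/2) * / A) by (field; lra).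
      replace (1 - /2 * A) with (((1 - /2*A)*A) * /A) by (field; lra).
      apply Rmult_le_compat_r. left; apply Rinv_0_lt_compat; lra. assert (0 <= (A-1)*(A-1)) by (apply Rle_0_sqr). nra. Qed.

Definition psi lam theta delta a := ln (lap_survival lam (theta - Rmax (theta - delta) a)).

Lemma Rmax_shift c y : Rmax c y - c = Rmax 0 (y - c).
Proof. unfold Rmax; destruct (Rle_dec c y), (Rle_dec 0 (y - c)); lra. Qed.

Lemma psi_T1 lam theta delta a h : 0 < lam -> 0 <= h ->
  psi lam theta delta (a + h) - psi lam theta delta a <= h / lam.
Proof. intros Hl Hh. unfold psi.
  set (s := theta - Rmax (theta - delta) (a + h)). set (t := theta - Rmax (theta - delta) a).
  assert (Hst : s <= t /\ t - s <= h).
  { unfold s, t, Rmax. destruct (Rle_dec (theta-delta) (a+h)), (Rle_dec (theta-delta) a); lra. }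
  destruct Hst as [H1 H2].
  pose proof (lap_slope lam s t Hl H1).
  pose proof (lap_bounds lam s Hl). pose proof (lap_bounds lam t Hl).
  assert (exp ((t-s)/lam) <= exp (h/lam)).
  { apply exp_le_mono. unfold Rdiv. assert (0 < / lam) by (apply Rinv_0_lt_compat; lra). nra. }
  assert (ln (lap_survival lam s) <= ln (lap_survival lam t * exp (h/lam))).
  { apply ln_le_mono. lra. eapply Rle_trans; [eauto|]. apply Rmult_le_compat_l; lra. }
  rewrite ln_mult, ln_exp in H5 by (try apply exp_pos; lra). lra. Qed.

Lemma psi_mono lam theta delta a h : 0 < lam -> 0 <= h ->
  psi lam theta delta a <= psi lam theta delta (a + h).
Proof. intros Hl Hh. unfold psi. apply ln_le_mono. apply lap_bounds; auto.
  apply lap_mono; auto. unfold Rmax. destruct (Rle_dec (theta-delta) (a+h)), (Rle_dec (theta-delta) a); lra. Qed.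

Lemma psi_T3 lam theta delta a h : 0 < lam -> 0 <= h -> 0 <= delta ->
  psi lam theta delta (a + h) - psi lam theta delta a <= Rmax 0 (a + h - theta + delta) / lam.
Proof. intros Hl Hh Hd. unfold psi.
  set (s := theta - Rmax (theta - delta) (a + h)).
  assert (Hs : s <= delta) by (unfold s; pose proof (Rmax_l (theta-delta) (a+h)); lra).
  assert (Hds : delta - s = Rmax 0 (a + h - theta + delta)).
  { unfold s. replace (a + h - theta + delta) with ((a+h) - (theta - delta)) by ring.
    rewrite <- Rmax_shift. ring. }
  pose proof (lap_slope lam s delta Hl Hs).
  pose proof (lap_bounds lam s Hl). pose proof (lap_bounds lam delta Hl).
  assert (ln (lap_survival lam s) <= ln (lap_survival lam delta * exp ((delta - s)/lam))).
  { apply ln_le_mono; lra. }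
  rewrite ln_mult, ln_exp in H2 by (try apply exp_pos; lra).
  assert (ln (lap_survival lam delta) <= ln (lap_survival lam (theta - Rmax (theta - delta) a))).
  { apply ln_le_mono; [lra|]. apply lap_mono; auto. pose proof (Rmax_l (theta-delta) a). lra. }
  rewrite Hds in H2. lra. Qed.

Lemma psi_T2 lam theta delta a h : 0 < lam -> 0 <= h -> 0 <= delta -> theta <= a ->
  psi lam theta delta (a + h) - psi lam theta delta a <= h / lam * exp ((theta - a) / lam).
Proof. intros Hl Hh Hd Ha. unfold psi.
  rewrite (Rmax_right (theta - delta) a) by lra.
  rewrite (Rmax_right (theta - delta) (a+h)) by lra.
  rewrite (lap_nonpos lam (theta - a)) by lra.
  rewrite (lap_nonpos lam (theta - (a + h))) by lra.
  set (E := exp ((theta - a)/lam)).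
  assert (Eq : exp ((theta - (a+h))/lam) = E * exp (-(h/lam))).
  { unfold E. rewrite <- exp_plus. f_equal. unfold Rdiv; ring. }
  rewrite Eq. set (q := exp (-(h/lam))).
  assert (HE : 0 < E <= 1). { split. apply exp_pos. apply exp_le1, div_le0; lra. }
  assert (Hq : 0 < q <= 1). { split. apply exp_pos. apply exp_le1. pose proof (div_ge0 h lam Hl Hh). lra. }
  assert (Hq2 : 1 - q <= h/lam). { pose proof (exp_ineq1_le (-(h/lam))). fold q in H. lra. }
  replace (ln (1 - / 2 * (E * q)) - ln (1 - / 2 * E)) with (ln ((1 - / 2 * (E * q)) * / (1 - / 2 * E))).
  2:{ rewrite ln_mult, ln_Rinv; try apply Rinv_0_lt_compat; try nra. }
  eapply Rle_trans. apply ln_le_sub1. apply Rmult_lt_0_compat. nra. apply Rinv_0_lt_compat; nra.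
  replace ((1 - / 2 * (E * q)) * / (1 - / 2 * E) - 1) with (E * (1 - q) * / (2 - E)) by (field; lra).
  assert (0 < /(2 - E) <= 1). { split. apply Rinv_0_lt_compat; lra. rewrite <- Rinv_1. apply Rinv_le_contravar; lra. }
  assert (0 <= E * (1-q)) by nra.
  assert (E * (1-q) * /(2-E) <= E * (1-q)) by nra.
  nra. Qed.

Fixpoint sumR {A} (f : A -> R) (l : list A) : R :=
  match l with [] => 0 | a :: l' => f a + sumR f l' end.

Lemma sumR_app {A} (f : A -> R) l1 l2 : sumR f (l1 ++ l2) = sumR f l1 + sumR f l2.
Proof. induction l1; simpl; [ring| rewrite IHl1; ring]. Qed.

Lemma sumR_le {A} (f g : A -> R) l : (forall a, In a l -> f a <= g a) -> sumR f l <= sumR g l.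
Proof. induction l; simpl; intros H; [lra|]. pose proof (H a (or_introl eq_refl)).
  assert (sumR f l <= sumR g l) by (apply IHl; intros; apply H; auto). lra. Qed.

Lemma sumR_zero {A} (f : A -> R) l : (forall a, In a l -> f a = 0) -> sumR f l = 0.
Proof. induction l; simpl; intros H; [lra|]. rewrite H by auto. rewrite IHl by (intros; apply H; auto). ring. Qed.

Lemma sumR_scale {A} c (f : A -> R) l : sumR (fun a => c * f a) l = c * sumR f l.
Proof. induction l; simpl; [ring| rewrite IHl; ring]. Qed.

Lemma sumR_map {A B} (f : B -> R) (g : A -> B) l : sumR f (map g l) = sumR (fun a => f (g a)) l.
Proof. induction l; simpl; [ring| rewrite IHl; ring]. Qed.

Lemma sumR_ext {A} (f g : A -> R) l : (forall a, In a l -> f a = g a) -> sumR f l = sumR g l.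
Proof. induction l; simpl; intros H; [lra|]. rewrite H by auto. rewrite IHl by (intros; apply H; auto). ring. Qed.

Lemma sumR_filter_split {A} (p : A -> bool) f l :
  sumR f l = sumR f (filter p l) + sumR f (filter (fun a => negb (p a)) l).
Proof. induction l; simpl; [ring|]. destruct (p a); simpl; rewrite IHl; ring. Qed.

Lemma sumR_filter_zero {A} (p : A -> bool) f l :
  (forall a, In a l -> p a = false -> f a = 0) -> sumR f l = sumR f (filter p l).
Proof. induction l; simpl; intros H; [ring|]. destruct (p a) eqn:E; simpl.
  - rewrite IHl by (intros; apply H; auto). ring.
  - rewrite H by auto. rewrite IHl by (intros; apply H; auto). ring. Qed.

Definition sep (d : R) (l : list R) :=
  NoDup l /\ forall x y, In x l -> In y l -> x <> y -> d <= Rabs (x - y).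

Lemma sep_sub d l l' : NoDup l' -> incl l' l -> sep d l -> sep d l'.
Proof. intros N I [_ H]. split; auto. Qed.

Lemma exists_max (l : list R) : l <> [] -> exists m, In m l /\ forall b, In b l -> b <= m.
Proof. induction l as [|a l IH]; intros H; [congruence|]. destruct l as [|c l].
  - exists a. split; [left; auto|]. intros b [->|[]]; lra.
  - destruct IH as [m [Hm Hb]]; [discriminate|]. destruct (Rle_dec a m).
    + exists m. split; [right; auto|]. intros b [<-|Hb']; auto.
    + exists a. split; [left; auto|]. intros b [<-|Hb']; [lra|]. specialize (Hb b Hb'). lra. Qed.

Lemma exists_min (l : list R) : l <> [] -> exists m, In m l /\ forall b, In b l -> m <= b.
Proof. induction l as [|a l IH]; intros H; [congruence|]. destruct l as [|c l].
  - exists a. split; [left; auto|]. intros b [->|[]]; lra.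
  - destruct IH as [m [Hm Hb]]; [discriminate|]. destruct (Rle_dec m a).
    + exists m. split; [right; auto|]. intros b [<-|Hb']; auto.
    + exists a. split; [left; auto|]. intros b [<-|Hb']; [lra|]. specialize (Hb b Hb'). lra. Qed.

Lemma sep_remove d l1 m l2 : sep d (l1 ++ m :: l2) -> sep d (l1 ++ l2) /\
  (forall b, In b (l1 ++ l2) -> In b (l1 ++ m :: l2) /\ b <> m /\ d <= Rabs (b - m)).
Proof. intros [N H]. split.
  - apply sep_sub with (l1 ++ m :: l2). eapply NoDup_remove_1; eauto.
    intros x Hx. apply in_app_or in Hx. apply in_or_app. simpl. tauto. split; auto.
  - intros b Hb. assert (In b (l1 ++ m :: l2)).
    { apply in_app_or in Hb. apply in_or_app. simpl. tauto. }
    assert (b <> m). { intros ->. eapply NoDup_remove_2; eauto. }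
    split; auto. split; auto. apply H; auto. apply in_or_app; simpl; auto. Qed.

Lemma geom lam theta delta beta : 0 < lam -> 1 < beta -> 0 < delta ->
  exp (- (delta / lam)) = / beta ->
  forall n l z, (length l <= n)%nat -> sep delta l -> (forall a, In a l -> z <= a) ->
  sumR (fun a => exp ((theta - a) / lam)) l <= exp ((theta - z) / lam) * (beta / (beta - 1)).
Proof. intros Hl Hb Hd He. induction n; intros l z Hn Hs Hz.
  - destruct l; [|simpl in Hn; lia]. simpl. pose proof (exp_pos ((theta - z)/lam)).
    assert (0 < beta / (beta - 1)) by (apply Rdiv_lt_0_compat; lra). nra.
  - destruct l as [|a0 l0] eqn:El.
    + simpl. pose proof (exp_pos ((theta - z)/lam)).
      assert (0 < beta / (beta - 1)) by (apply Rdiv_lt_0_compat; lra). nra.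
    + rewrite <- El in *. destruct (exists_min l) as [m [Hm Hmin]]; [rewrite El; discriminate|].
      destruct (in_split _ _ Hm) as [l1 [l2 E]]. rewrite E in Hs.
      destruct (sep_remove _ _ _ _ Hs) as [Hs' Hb'].
      assert (Hlen : (length (l1 ++ l2) <= n)%nat).
      { assert (length l = S (length (l1 ++ l2))) by (rewrite E, !length_app; simpl; lia). lia. }
      assert (Hz' : forall b, In b (l1 ++ l2) -> m + delta <= b).
      { intros b Hbb. destruct (Hb' b Hbb) as [Hin [Hne Hab]]. rewrite <- E in Hin.
        specialize (Hmin b Hin). unfold Rabs in Hab. destruct (Rcase_abs (b - m)); lra. }
      specialize (IHn _ _ Hlen Hs' Hz').
      rewrite E, sumR_app. simpl. rewrite <- (Rplus_0_l (sumR _ l1)) at 1.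
      assert (Hsplit : sumR (fun a => exp ((theta - a) / lam)) l1 + (exp ((theta - m) / lam) + sumR (fun a => exp ((theta - a) / lam)) l2)
          = exp ((theta - m) / lam) + sumR (fun a => exp ((theta - a) / lam)) (l1 ++ l2)) by (rewrite sumR_app; ring).
      rewrite Rplus_0_l, Hsplit.
      assert (Ee : exp ((theta - (m + delta)) / lam) = exp ((theta - m)/lam) * / beta).
      { rewrite <- He, <- exp_plus. f_equal. unfold Rdiv; ring. }
      rewrite Ee in IHn.
      assert (exp ((theta - m)/lam) <= exp ((theta - z)/lam)).
      { apply exp_le_mono. assert (z <= m) by (apply Hz; rewrite E; apply in_or_app; simpl; auto).
        unfold Rdiv. assert (0 < / lam) by (apply Rinv_0_lt_compat; lra). nra. }
      assert (Eq2 : exp ((theta - m) / lam) * / beta * (beta / (beta - 1)) = exp ((theta - m) / lam) * / (beta - 1)) by (field; lra).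
      rewrite Eq2 in IHn.
      assert (exp ((theta - m) / lam) + exp ((theta - m) / lam) * / (beta - 1) = exp ((theta - m) / lam) * (beta / (beta - 1))) by (field; lra).
      assert (0 < beta / (beta - 1)) by (apply Rdiv_lt_0_compat; lra).
      nra. Qed.

Lemma rsum lam theta delta h l y : 0 < lam -> 0 < delta -> sep delta l ->
  (forall a, In a l -> a <= y) -> y + h <= theta ->
  sumR (fun a => Rmax 0 (a + h - theta + delta) / lam) l <= Rmax 0 (y + h - theta + delta) / lam.
Proof. intros Hl Hd. assert (0 < / lam) by (apply Rinv_0_lt_compat; lra).
  assert (Hmono : forall u v, u <= v -> Rmax 0 (u + h - theta + delta) / lam <= Rmax 0 (v + h - theta + delta) / lam).
  { intros u v Huv. unfold Rdiv. apply Rmult_le_compat_r; [lra|]. unfold Rmax.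
    destruct (Rle_dec 0 (u + h - theta + delta)), (Rle_dec 0 (v + h - theta + delta)); lra. }
  assert (Hzero : forall u, u <= y - delta -> y + h <= theta -> Rmax 0 (u + h - theta + delta) / lam = 0).
  { intros u Hu Hy. rewrite Rmax_left by lra. unfold Rdiv; ring. }
  assert (Hnn : forall u, 0 <= Rmax 0 (u + h - theta + delta) / lam).
  { intros u. unfold Rdiv. apply Rmult_le_pos; [apply Rmax_l|lra]. }
  induction l as [|a l IH]; intros Hs Hy Hyh; simpl; [apply Hnn|].
  destruct Hs as [N Hs]. inversion N; subst.
  assert (Hsl : sep delta l). { split; auto. intros; apply Hs; simpl; auto. }
  destruct (Rle_dec a (y - delta)).
  - rewrite Hzero by auto. rewrite Rplus_0_l. apply IH; auto. intros; apply Hy; simpl; auto.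
  - rewrite sumR_zero. rewrite Rplus_0_r. apply Hmono. apply Hy; simpl; auto.
    intros b Hb. apply Hzero; auto.
    assert (b <> a) by (intros ->; contradiction).
    specialize (Hs b a (or_intror Hb) (or_introl eq_refl) H0).
    assert (b <= y) by (apply Hy; simpl; auto). assert (a <= y) by (apply Hy; simpl; auto).
    unfold Rabs in Hs. destruct (Rcase_abs (b - a)); lra. Qed.

Lemma exp_half_lt2 : exp (/2) < 2.
Proof. apply Rlt_le_trans with (exp (ln 2)). apply exp_increasing, ln_lt_2. rewrite exp_ln; lra. Qed.

Definition Kc (beta : R) := 1 + beta / (beta - 1).

Lemma small lam theta delta beta h l : 0 < lam -> 2 <= beta -> 0 < delta ->
  exp (- (delta / lam)) = / beta -> 0 <= h -> h <= delta -> h <= lam / 2 -> sep delta l ->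
  sumR (fun a => psi lam theta delta (a + h) - psi lam theta delta a) l <= Kc beta * (h / lam).
Proof. intros Hl Hb Hd He Hh0 Hhd Hhl Hs.
  assert (Hil : 0 < / lam) by (apply Rinv_0_lt_compat; lra).
  assert (HH : 0 <= h / lam) by (apply div_ge0; lra).
  assert (HH2 : h / lam <= /2). { unfold Rdiv. apply Rmult_le_reg_r with lam; auto.
     rewrite Rmult_assoc, Rinv_l by lra. lra. }
  assert (Hbb : 0 < beta / (beta - 1)) by (apply Rdiv_lt_0_compat; lra).
  set (F := fun a => psi lam theta delta (a + h) - psi lam theta delta a).
  set (p := fun a : R => if Rle_dec a theta then true else false).
  rewrite (sumR_filter_split p).
  set (low := filter p l). set (high := filter (fun a => negb (p a)) l).
  assert (Hlow : forall a, In a low <-> In a l /\ a <= theta).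
  { intros a. unfold low. rewrite filter_In. unfold p. destruct (Rle_dec a theta) as [r|r]; split; intros [H1 H2]; try split; auto; try discriminate; contradiction. }
  assert (Hhigh : forall a, In a high <-> In a l /\ theta < a).
  { intros a. unfold high. rewrite filter_In. unfold p. destruct (Rle_dec a theta) as [r|r]; simpl; split; intros [H1 H2]; try split; auto; try discriminate; try lra. }
  assert (Shigh : sep delta high). { apply sep_sub with l; auto. apply NoDup_filter. apply Hs. intros a Ha. apply Hhigh in Ha; tauto. }
  assert (Slow : sep delta low). { apply sep_sub with l; auto. apply NoDup_filter. apply Hs. intros a Ha. apply Hlow in Ha; tauto. }
  assert (Fhigh : sumR F high <= h / lam * sumR (fun a => exp ((theta - a) / lam)) high).
  { rewrite <- sumR_scale. apply sumR_le. intros a Ha. apply Hhigh in Ha. unfold F. apply psi_T2; lra. }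
  assert (G1 : sumR (fun a => exp ((theta - a) / lam)) high <= beta / (beta - 1)).
  { pose proof (geom lam theta delta beta Hl ltac:(lra) Hd He (length high) high theta (le_n _) Shigh).
    replace ((theta - theta) / lam) with 0 in H by (unfold Rdiv; ring). rewrite exp_0 in H.
    rewrite Rmult_1_l in H. apply H. intros a Ha; apply Hhigh in Ha; lra. }
  assert (Gn : 0 <= sumR (fun a => exp ((theta - a) / lam)) high).
  { rewrite <- (sumR_zero (fun _ => 0) high) by auto. apply sumR_le. intros; left; apply exp_pos. }
  unfold Kc.
  destruct low as [|m0 low0] eqn:Elow.
  - simpl. nra.
  - rewrite <- Elow in *. destruct (exists_max low) as [m [Hm Hmax]]; [rewrite Elow; discriminate|].
    destruct (in_split _ _ Hm) as [l1 [l2 E]].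
    pose proof Slow as Slow'. rewrite E in Slow'.
    destruct (sep_remove _ _ _ _ Slow') as [Slow'' Hrem].
    assert (Hmt : m <= theta) by (apply Hlow in Hm; tauto).
    assert (Hrest : forall b, In b (l1 ++ l2) -> b <= m - delta).
    { intros b Hq. destruct (Hrem b Hq) as [Hin [Hne Hab]]. rewrite <- E in Hin.
      specialize (Hmax b Hin). unfold Rabs in Hab. destruct (Rcase_abs (b - m)); lra. }
    assert (Flow : sumR F low <= h / lam + Rmax 0 (m + h - theta) / lam).
    { rewrite E, sumR_app. simpl.
      assert (F m <= h / lam) by (unfold F; apply psi_T1; lra).
      assert (sumR F (l1 ++ l2) <= Rmax 0 (m + h - theta) / lam).
      { eapply Rle_trans. apply sumR_le with (g := fun a => Rmax 0 (a + h - theta + delta) / lam).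
        intros a Ha. specialize (Hrest a Ha). unfold F. apply psi_T3; lra.
        replace (m + h - theta) with ((m - delta) + h - theta + delta) by ring.
        apply rsum; auto. lra. }
      rewrite sumR_app in H0. lra. }
    assert (G2 : sumR (fun a => exp ((theta - a) / lam)) high <= exp ((theta - m) / lam) * / beta * (beta / (beta - 1))).
    { pose proof (geom lam theta delta beta Hl ltac:(lra) Hd He (length high) high (m + delta) (le_n _) Shigh).
      replace (exp ((theta - m) / lam) * / beta) with (exp ((theta - (m + delta)) / lam)).
      apply H. intros a Ha. apply Hhigh in Ha. destruct Ha as [Ha1 Ha2].
      assert (a <> m) by (intros ->; lra).
      destruct Hs as [_ Hs]. specialize (Hs a m Ha1 ltac:(apply Hlow in Hm; tauto) H0).
      unfold Rabs in Hs. destruct (Rcase_abs (a - m)); lra.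
      rewrite <- He, <- exp_plus. f_equal. unfold Rdiv; ring. }
    set (H := h / lam) in *. set (P := (theta - m) / lam) in *.
    assert (HP : 0 <= P) by (apply div_ge0; lra).
    destruct (Rle_dec (m + h) theta).
    + rewrite Rmax_left in Flow by lra. replace (0 / lam) with 0 in Flow by (unfold Rdiv; ring). nra.
    + rewrite Rmax_right in Flow by lra.
      replace ((m + h - theta) / lam) with (H - P) in Flow by (unfold H, P, Rdiv; ring).
      assert (HPH : P < H) by (unfold H, P; unfold Rdiv; apply Rmult_lt_compat_r; lra).
      assert (E1 : exp P * (1 - P) <= 1).
      { pose proof (exp_ineq1_le (-P)). rewrite exp_Ropp in H0. pose proof (exp_pos P).
        assert (exp P * (1 - P) <= exp P * / exp P) by (apply Rmult_le_compat_l; lra). rewrite Rinv_r in H2 by lra. exact H2. }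
      assert (E2 : exp P <= 2). { pose proof exp_half_lt2. assert (exp P <= exp (/2)) by (apply exp_le_mono; lra). lra. }
      assert (E3 : H * (exp P - 1) <= P * (beta - 1)).
      { assert (exp P - 1 <= P * exp P) by nra. assert (H * exp P <= 1) by nra. nra. }
      assert (Eb : exp P * / beta * (beta / (beta - 1)) = exp P / (beta - 1)) by (field; lra).
      rewrite Eb in G2.
      assert (Hfin : H + (H - P) + H * (exp P / (beta - 1)) <= (1 + beta / (beta - 1)) * H).
      { apply Rmult_le_reg_r with (beta - 1); [lra|].
        replace ((H + (H - P) + H * (exp P / (beta - 1))) * (beta - 1)) with ((2*H - P)*(beta - 1) + H * exp P) by (field; lra).
        replace ((1 + beta / (beta - 1)) * H * (beta - 1)) with (H * (beta - 1) + H * beta) by (field; lra).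
        nra. }
      assert (sumR F high <= H * (exp P / (beta - 1))) by (eapply Rle_trans; [apply Fhigh|]; apply Rmult_le_compat_l; lra).
      lra. Qed.

Lemma sumR_plus {A} (f g : A -> R) l : sumR (fun a => f a + g a) l = sumR f l + sumR g l.
Proof. induction l; simpl; [ring| rewrite IHl; ring]. Qed.

Lemma sep_shift d c l : sep d l -> sep d (map (fun a => a + c) l).
Proof. intros [N H]. split.
  - apply FinFun.Injective_map_NoDup; auto. intros x y E; lra.
  - intros x y Hx Hy Hne. apply in_map_iff in Hx, Hy. destruct Hx as [x' [<- Hx]]. destruct Hy as [y' [<- Hy]].
    replace (x' + c - (y' + c)) with (x' - y') by ring. apply H; auto. intros ->. apply Hne; auto. Qed.

Lemma full lam theta delta beta l : 0 < lam -> 2 <= beta -> 0 < delta ->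
  exp (- (delta / lam)) = / beta -> sep delta l ->
  sumR (fun a => psi lam theta delta (a + 1) - psi lam theta delta a) l <= Kc beta / lam.
Proof. intros Hl Hb Hd He Hs.
  set (Pr := fun h => forall l, sep delta l ->
    sumR (fun a => psi lam theta delta (a + h) - psi lam theta delta a) l <= Kc beta * (h / lam)).
  assert (Hnat : forall h0 n, Pr h0 -> Pr (INR n * h0)).
  { intros h0 n Hp. induction n; intros l0 Hs0.
    - simpl. rewrite sumR_zero. replace (0 * h0 / lam) with 0 by (unfold Rdiv; ring). lra.
      intros a _. replace (a + 0 * h0) with a by ring. ring.
    - rewrite S_INR. rewrite (sumR_ext _ (fun a => (psi lam theta delta ((a + h0) + INR n * h0) - psi lam theta delta (a + h0)) + (psi lam theta delta (a + h0) - psi lam theta delta a))).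
      2:{ intros a _. replace (a + (INR n + 1) * h0) with (a + h0 + INR n * h0) by ring. ring. }
      rewrite sumR_plus.
      pose proof (IHn (map (fun a => a + h0) l0) (sep_shift _ _ _ Hs0)). rewrite sumR_map in H.
      pose proof (Hp l0 Hs0).
      replace (Kc beta * ((INR n + 1) * h0 / lam)) with (Kc beta * (INR n * h0 / lam) + Kc beta * (h0 / lam)) by (unfold Rdiv; ring).
      lra. }
  set (m := Rmin delta (lam / 2)).
  assert (Hm : 0 < m) by (unfold m; apply Rmin_pos; lra).
  destruct (INR_unbounded (/ m)) as [n Hn].
  assert (Hn0 : 0 < INR n). { pose proof (Rinv_0_lt_compat m Hm). lra. }
  assert (Hh0 : / INR n <= m).
  { rewrite <- (Rinv_inv m). apply Rinv_le_contravar. apply Rinv_0_lt_compat; lra. lra. }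
  assert (Pr (/ INR n)).
  { intros l0 Hs0. apply small; auto. left; apply Rinv_0_lt_compat; lra.
    pose proof (Rmin_l delta (lam/2)); fold m in H; lra.
    pose proof (Rmin_r delta (lam/2)); fold m in H; lra. }
  pose proof (Hnat _ n H l Hs). rewrite Rinv_r in H0 by lra.
  replace (Kc beta / lam) with (Kc beta * (1 / lam)) by (unfold Rdiv; ring). exact H0. Qed.
Definition good (beta : nat) (v : node) := Forall (fun j => (j < beta)%nat) v.

Lemma good_I beta I : valid_output beta I -> forall v, In v I -> good beta v.
Proof. intros [_ HI] v. induction v as [|k v IH] using rev_ind; intros Hin.
  - constructor.
  - destruct (HI _ Hin) as [E|[u [j [Hu [Hj E]]]]].
    + destruct v; simpl in E; discriminate.
    + unfold child in E. apply app_inj_tail in E as [E1 E2]. subst.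
      apply Forall_app; split; auto. apply IH; auto. Qed.

Lemma prefix_I beta I : valid_output beta I -> forall s u, In (u ++ s) I -> In u I.
Proof. intros [_ HI] s. induction s as [|k s IH] using rev_ind; intros u Hin.
  - rewrite app_nil_r in Hin; auto.
  - rewrite app_assoc in Hin. destruct (HI _ Hin) as [E|[u' [j [Hu [Hj E]]]]].
    + destruct (u ++ s); simpl in E; discriminate.
    + unfold child in E. apply app_inj_tail in E as [E1 _]. subst. apply IH; auto. Qed.

Lemma anc Omega beta dom (Hdom : splitting_scheme Omega beta dom) :
  forall s u y, good beta (u ++ s) -> dom (u ++ s) y = true -> dom u y = true.
Proof. destruct Hdom as [_ [H2 _]]. intros s. induction s as [|k s IH] using rev_ind; intros u y Hg Hd.
  - rewrite app_nil_r in Hd; auto.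
  - rewrite app_assoc in Hg, Hd. unfold good in Hg. apply Forall_app in Hg as [Hg Hk].
    inversion Hk; subst. apply IH; auto. eapply H2; eauto. Qed.

Lemma uniq_node Omega beta dom (Hdom : splitting_scheme Omega beta dom) x :
  forall v w, good beta v -> good beta w -> length v = length w ->
  dom v x = true -> dom w x = true -> v = w.
Proof. intros v. induction v as [|j v IH] using rev_ind; intros w Gv Gw L Dv Dw.
  - destruct w; [auto|discriminate].
  - destruct w as [|c w' IHw'] using rev_ind; [rewrite length_app in L; simpl in L; lia|].
    clear IHw'. rewrite !length_app in L; simpl in L.
    unfold good in Gv, Gw. apply Forall_app in Gv as [Gv Gj]. apply Forall_app in Gw as [Gw Gk].
    inversion Gj; inversion Gk; subst.
    assert (Dv' : dom v x = true) by (eapply (anc _ _ _ Hdom [j]); eauto; apply Forall_app; auto).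
    assert (Dw' : dom w' x = true) by (eapply (anc _ _ _ Hdom [c]); eauto; apply Forall_app; auto).
    assert (v = w') by (apply IH; auto; lia). subst.
    destruct Hdom as [_ [_ H3]]. destruct (H3 w' x Dw') as [j0 [_ [_ U]]].
    rewrite (U j) by auto. rewrite (U c) by auto. reflexivity. Qed.

Lemma prefix_node Omega beta dom (Hdom : splitting_scheme Omega beta dom) x v w :
  good beta v -> good beta w -> (length v <= length w)%nat ->
  dom v x = true -> dom w x = true -> w = v ++ skipn (length v) w.
Proof. intros Gv Gw L Dv Dw.
  pose proof (firstn_skipn (length v) w) as E.
  assert (Gf : good beta (firstn (length v) w ++ skipn (length v) w)) by (rewrite E; auto).
  assert (firstn (length v) w = v).
  { eapply uniq_node; eauto.
    - unfold good in Gf. apply Forall_app in Gf; tauto.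
    - rewrite length_firstn. lia.
    - eapply anc; eauto. rewrite E; auto. }
  rewrite H in E. auto. Qed.

Lemma count_le {Omega} (f g : Omega -> bool) D :
  (forall y, f y = true -> g y = true) -> (length (filter f D) <= length (filter g D))%nat.
Proof. intros H. induction D; simpl; auto. destruct (f a) eqn:E.
  - rewrite (H a E). simpl; lia.
  - destruct (g a); simpl; lia. Qed.

Lemma filter_perm_len {Omega} (f : Omega -> bool) l l' :
  Permutation l l' -> length (filter f l) = length (filter f l').
Proof. induction 1; simpl; auto.
  - destruct (f x); simpl; auto.
  - destruct (f x), (f y); simpl; auto.
  - lia. Qed.

Lemma count_perm {Omega} (dom : node -> Omega -> bool) D1 D2 x v :
  Permutation D2 (x :: D1) ->
  count_in dom D2 v = (count_in dom D1 v + (if dom v x then 1 else 0))%nat.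
Proof. intros P. unfold count_in. rewrite (filter_perm_len _ _ _ P). simpl.
  destruct (dom v x); simpl; lia. Qed.

Lemma in_nodes_false v I : in_nodes v I = false <-> ~ In v I.
Proof. unfold in_nodes. destruct (in_dec (list_eq_dec Nat.eq_dec) v I); split; intros; auto; try discriminate; contradiction. Qed.

Lemma leaves_char beta I w : In w (leaves beta I) ->
  (I = [] /\ w = []) \/ (exists u j, In u I /\ (j < beta)%nat /\ w = child u j /\ ~ In w I).
Proof. unfold leaves. destruct I as [|n I'].
  - intros [<-|[]]. left; auto.
  - intros H. right. apply filter_In in H as [H1 H2].
    apply Bool.negb_true_iff, in_nodes_false in H2.
    apply in_flat_map in H1 as [u [Hu Hw]]. apply in_map_iff in Hw as [j [<- Hj]].
    apply in_seq in Hj. exists u, j. repeat split; auto; lia. Qed.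

Lemma child_inj v u i j : child v i = child u j -> v = u /\ i = j.
Proof. unfold child. intros E. apply app_inj_tail in E. auto. Qed.

Lemma nodup_flat beta l : NoDup l -> NoDup (flat_map (fun v => map (child v) (seq 0 beta)) l).
Proof. induction l as [|v l IH]; simpl; intros N; [constructor|]. inversion N; subst.
  apply NoDup_app; auto.
  - apply FinFun.Injective_map_NoDup. intros i j E. apply child_inj in E; tauto. apply seq_NoDup.
  - intros a Ha Hb. apply in_map_iff in Ha as [i [<- _]]. apply in_flat_map in Hb as [u [Hu Hb]].
    apply in_map_iff in Hb as [j [E _]]. apply child_inj in E as [-> _]. contradiction. Qed.

Lemma nodup_leaves beta I : NoDup I -> NoDup (leaves beta I).
Proof. intros N. unfold leaves. destruct I. repeat constructor; simpl; tauto.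
  apply NoDup_filter. apply nodup_flat; auto. Qed.

Lemma leaf_unique Omega beta dom (Hdom : splitting_scheme Omega beta dom) x I :
  valid_output beta I -> forall w1 w2, In w1 (leaves beta I) -> In w2 (leaves beta I) ->
  dom w1 x = true -> dom w2 x = true -> w1 = w2.
Proof. intros HV.
  assert (key : forall w1 w2, In w1 (leaves beta I) -> In w2 (leaves beta I) ->
     dom w1 x = true -> dom w2 x = true -> (length w1 <= length w2)%nat -> w1 = w2).
  { intros w1 w2 H1 H2 D1 D2 L.
    destruct (leaves_char _ _ _ H1) as [[E1 E1']|[u1 [j1 [Hu1 [Hj1 [E1 N1]]]]]];
    destruct (leaves_char _ _ _ H2) as [[E2 E2']|[u2 [j2 [Hu2 [Hj2 [E2 N2]]]]]]; subst; auto;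
      try contradiction.
    assert (G1 : good beta (child u1 j1)) by (apply Forall_app; split; [eapply good_I; eauto|repeat constructor; auto]).
    assert (G2 : good beta (child u2 j2)) by (apply Forall_app; split; [eapply good_I; eauto|repeat constructor; auto]).
    destruct (Nat.eq_dec (length (child u1 j1)) (length (child u2 j2))) as [Le|Lne].
    - eapply uniq_node; eauto.
    - exfalso. unfold child in *. rewrite !length_app in L, Lne. simpl in L, Lne.
      assert (Gu2 : good beta u2) by (eapply good_I; eauto).
      assert (Du2 : dom u2 x = true) by (eapply (anc _ _ _ Hdom [j2]); eauto).
      assert (E := prefix_node _ _ _ Hdom x (u1 ++ [j1]) u2 G1 Gu2 ltac:(rewrite length_app; simpl; lia) D1 Du2).
      rewrite E in Hu2. apply (prefix_I _ _ HV) in Hu2. contradiction. }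
  intros w1 w2 H1 H2 D1 D2. destruct (Nat.le_ge_cases (length w1) (length w2)).
  - apply key; auto. - symmetry; apply key; auto. Qed.


Lemma prodR_pos {A} (F : A -> R) l : (forall v, 0 < F v) -> 0 < prodR (map F l).
Proof. intros H. induction l; simpl; [lra|]. apply Rmult_lt_0_compat; auto. Qed.

Lemma ln_ratio_prod {A} (F G : A -> R) l : (forall v, 0 < F v) -> (forall v, 0 < G v) ->
  ln (prodR (map F l) / prodR (map G l)) = sumR (fun v => ln (F v / G v)) l.
Proof. intros HF HG. induction l; simpl.
  - replace (1/1) with 1 by field. apply ln_1.
  - pose proof (prodR_pos F l HF). pose proof (prodR_pos G l HG). pose proof (HF a). pose proof (HG a).
    replace (F a * prodR (map F l) / (G a * prodR (map G l))) with ((F a / G a) * (prodR (map F l) / prodR (map G l))) by (field; lra).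
    rewrite ln_mult, IHl; auto; apply Rdiv_lt_0_compat; auto. Qed.

Lemma ln_ratio_le x y c : 0 < x -> 0 < y -> x <= y * exp c -> ln (x / y) <= c.
Proof. intros Hx Hy H. rewrite <- (ln_exp c). apply ln_le_mono. apply Rdiv_lt_0_compat; auto.
  apply Rmult_le_reg_r with y; auto. unfold Rdiv. rewrite Rmult_assoc, Rinv_l by lra. lra. Qed.

Lemma ln_ratio_nonpos x y : 0 < x -> x <= y -> ln (x / y) <= 0.
Proof. intros Hx H. apply ln_ratio_le; auto; try lra. rewrite exp_0; lra. Qed.

Lemma singleton_or_nil {A} (l : list A) : NoDup l -> (forall a b, In a l -> In b l -> a = b) ->
  l = [] \/ exists a, l = [a].
Proof. intros N H. destruct l as [|a [|b l]]; auto. right; eauto.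
  exfalso. inversion N; subst. apply H2. rewrite (H a b) by (simpl; auto). simpl; auto. Qed.

Lemma core Omega (beta : nat) dom (Hbeta : (2 <= beta)%nat) (Hdom : splitting_scheme Omega beta dom)
  eps theta lam delta (Heps : 0 < eps)
  (Hlam : (2 * INR beta - 1) / (INR beta - 1) * / eps <= lam)
  (Hdelta : delta = lam * ln (INR beta)) D1 D2 x (Hp : Permutation D2 (x :: D1))
  I (HI : valid_output beta I) :
  ln (privtree_prob beta dom D2 lam theta delta I / privtree_prob beta dom D1 lam theta delta I) <= eps /\
  ln (privtree_prob beta dom D1 lam theta delta I / privtree_prob beta dom D2 lam theta delta I) <= eps.
Proof.
  set (b := INR beta) in *.
  assert (Hb : 2 <= b) by (unfold b; replace 2 with (INR 2) by (simpl; ring); apply le_INR; auto).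
  assert (HK : Kc b = (2 * b - 1) / (b - 1)) by (unfold Kc; field; lra).
  assert (HK1 : 1 <= Kc b) by (unfold Kc; assert (0 < b/(b-1)) by (apply Rdiv_lt_0_compat; lra); lra).
  rewrite <- HK in Hlam.
  assert (Hie : 0 < / eps) by (apply Rinv_0_lt_compat; lra).
  assert (Hl : 0 < lam) by nra.
  assert (HKe : Kc b / lam <= eps).
  { assert (Kc b <= lam * eps).
    { replace (Kc b) with (Kc b * / eps * eps) by (field; lra). apply Rmult_le_compat_r; lra. }
    apply Rmult_le_reg_r with lam; auto. unfold Rdiv. rewrite Rmult_assoc, Rinv_l by lra. lra. }
  assert (H1e : 1 / lam <= eps).
  { eapply Rle_trans; [|exact HKe]. unfold Rdiv. apply Rmult_le_compat_r; [left; apply Rinv_0_lt_compat|]; lra. }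
  assert (Hlnb : 0 < ln b).
  { assert (ln 2 <= ln b) by (apply ln_le_mono; lra). pose proof ln_lt_2. lra. }
  assert (Hd : 0 < delta) by (rewrite Hdelta; nra).
  assert (He : exp (- (delta / lam)) = / b).
  { rewrite exp_Ropp. replace (delta / lam) with (ln b) by (rewrite Hdelta; field; lra).
    rewrite exp_ln; lra. }
  set (f := fun D v => split_prob lam theta (biased_count dom D theta delta v)).
  assert (Pdec : forall D, privtree_prob beta dom D lam theta delta I =
     prodR (map (f D) I) * prodR (map (fun v => 1 - f D v) (leaves beta I))) by reflexivity.
  assert (Fb : forall D v, 0 < f D v < 1) by (intros; apply lap_bounds; auto).
  assert (Fpos : forall D v, 0 < f D v) by (intros; apply Fb).
  assert (Gpos : forall D v, 0 < 1 - f D v) by (intros; pose proof (Fb D v); lra).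
  set (a := fun v => INR (count_in dom D1 v) - INR (depth v) * delta).
  assert (Hb1 : forall v, biased_count dom D1 theta delta v = Rmax (theta - delta) (a v)) by reflexivity.
  assert (Hb2 : forall v, biased_count dom D2 theta delta v = Rmax (theta - delta) (a v + (if dom v x then 1 else 0))).
  { intros v. unfold biased_count. rewrite (count_perm dom D1 D2 x v Hp), plus_INR. unfold a.
    f_equal. destruct (dom v x); simpl; ring. }
  assert (Hf1 : forall v, f D1 v = lap_survival lam (theta - Rmax (theta - delta) (a v))).
  { intros v. unfold f, split_prob. rewrite Hb1. reflexivity. }
  assert (Hf2 : forall v, f D2 v = lap_survival lam (theta - Rmax (theta - delta) (a v + (if dom v x then 1 else 0)))).
  { intros v. unfold f, split_prob. rewrite Hb2. reflexivity. }
  assert (Hfx : forall v, dom v x = false -> f D2 v = f D1 v).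
  { intros v E. rewrite Hf1, Hf2, E, Rplus_0_r. reflexivity. }
  assert (Hmono : forall v, f D1 v <= f D2 v).
  { intros v. rewrite Hf1, Hf2. apply lap_mono; auto.
    assert (a v <= a v + (if dom v x then 1 else 0)) by (destruct (dom v x); lra).
    assert (Rmax (theta - delta) (a v) <= Rmax (theta - delta) (a v + (if dom v x then 1 else 0)))
      by (apply Rle_max_compat_l; auto). lra. }
  assert (Hratio : forall D D', ln (privtree_prob beta dom D lam theta delta I / privtree_prob beta dom D' lam theta delta I)
     = sumR (fun v => ln (f D v / f D' v)) I + sumR (fun v => ln ((1 - f D v) / (1 - f D' v))) (leaves beta I)).
  { intros D D'. rewrite !Pdec.
    pose proof (prodR_pos (f D) I (Fpos D)). pose proof (prodR_pos (f D') I (Fpos D')).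
    pose proof (prodR_pos (fun v => 1 - f D v) (leaves beta I) (Gpos D)).
    pose proof (prodR_pos (fun v => 1 - f D' v) (leaves beta I) (Gpos D')).
    rewrite <- (ln_ratio_prod (f D) (f D')) by auto.
    rewrite <- (ln_ratio_prod (fun v => 1 - f D v) (fun v => 1 - f D' v)) by auto.
    rewrite <- ln_mult by (apply Rdiv_lt_0_compat; auto). f_equal. field. split; lra. }
  assert (Hsame : forall D D' v, f D v = f D' v -> ln (f D v / f D' v) = 0).
  { intros D D' v E. rewrite E. replace (f D' v / f D' v) with 1 by (field; pose proof (Fpos D' v); lra). apply ln_1. }
  assert (Hsame' : forall D D' v, f D v = f D' v -> ln ((1 - f D v) / (1 - f D' v)) = 0).
  { intros D D' v E. rewrite E. replace ((1 - f D' v) / (1 - f D' v)) with 1 by (field; pose proof (Gpos D' v); lra). apply ln_1. }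
  split.
  -
    rewrite Hratio.
    assert (Lf : sumR (fun v => ln ((1 - f D2 v) / (1 - f D1 v))) (leaves beta I) <= 0).
    { rewrite <- (sumR_zero (fun _ => 0) (leaves beta I)) by auto. apply sumR_le.
      intros v _. apply ln_ratio_nonpos; auto. pose proof (Hmono v); lra. }
    set (J := filter (fun v => dom v x) I).
    assert (EJ : sumR (fun v => ln (f D2 v / f D1 v)) I = sumR (fun v => ln (f D2 v / f D1 v)) J).
    { apply sumR_filter_zero. intros v _ E. apply Hsame. apply Hfx; auto. }
    assert (HJ : forall v, In v J <-> In v I /\ dom v x = true) by (intros; unfold J; apply filter_In).
    assert (EJ2 : sumR (fun v => ln (f D2 v / f D1 v)) J = sumR (fun v => psi lam theta delta (v + 1) - psi lam theta delta v) (map a J)).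
    { rewrite sumR_map. apply sumR_ext. intros v Hv. apply HJ in Hv as [_ Dv].
      unfold Rdiv. rewrite ln_mult, ln_Rinv; try apply Fpos; try (apply Rinv_0_lt_compat; apply Fpos).
      rewrite Hf1, Hf2, Dv. unfold psi. ring. }
    assert (Hdist : forall v w, In v J -> In w J -> (length v < length w)%nat -> a w + delta <= a v).
    { intros v w Hv Hw L. apply HJ in Hv as [Iv Dv]. apply HJ in Hw as [Iw Dw].
      assert (Gv := good_I _ _ HI v Iv). assert (Gw := good_I _ _ HI w Iw).
      pose proof (prefix_node _ _ _ Hdom x v w Gv Gw ltac:(lia) Dv Dw) as Ew.
      assert (Cle : (count_in dom D1 w <= count_in dom D1 v)%nat).
      { unfold count_in. apply count_le. intros y Hy. rewrite Ew in Hy, Gw.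
        eapply anc; eauto. }
      apply le_INR in Cle.
      assert (Lle : INR (length v) + 1 <= INR (length w)) by (rewrite <- S_INR; apply le_INR; lia).
      unfold a, depth. nra. }
    assert (Hsep : sep delta (map a J)).
    { assert (Hne : forall v w, In v J -> In w J -> v <> w -> delta <= Rabs (a v - a w)).
      { intros v w Hv Hw Nvw. destruct (Nat.lt_trichotomy (length v) (length w)) as [L|[L|L]].
        - specialize (Hdist v w Hv Hw L). rewrite Rabs_right; lra.
        - exfalso. apply Nvw. apply HJ in Hv as [Iv Dv]. apply HJ in Hw as [Iw Dw].
          eapply uniq_node; eauto; eapply good_I; eauto.
        - specialize (Hdist w v Hw Hv L). rewrite Rabs_left1; lra. }
      split.
      - apply FinFun.Injective_map_NoDup_in.
        + intros v w Hv Hw E. destruct (list_eq_dec Nat.eq_dec v w); auto.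
          specialize (Hne v w Hv Hw n). rewrite E, Rminus_diag, Rabs_R0 in Hne. lra.
        + apply NoDup_filter. apply HI.
      - intros y z Hy Hz Nyz. apply in_map_iff in Hy as [v [<- Hv]]. apply in_map_iff in Hz as [w [<- Hw]].
        apply Hne; auto. intros ->. apply Nyz; auto. }
    pose proof (full lam theta delta b (map a J) Hl Hb Hd He Hsep).
    rewrite EJ, EJ2. lra.
  -
    rewrite Hratio.
    assert (Li : sumR (fun v => ln (f D1 v / f D2 v)) I <= 0).
    { rewrite <- (sumR_zero (fun _ => 0) I) by auto. apply sumR_le.
      intros v _. apply ln_ratio_nonpos; auto. }
    set (lf := filter (fun v => dom v x) (leaves beta I)).
    assert (El : sumR (fun v => ln ((1 - f D1 v) / (1 - f D2 v))) (leaves beta I)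
                 = sumR (fun v => ln ((1 - f D1 v) / (1 - f D2 v))) lf).
    { apply sumR_filter_zero. intros v _ E. apply Hsame'. symmetry. apply Hfx; auto. }
    assert (Hterm : forall v, ln ((1 - f D1 v) / (1 - f D2 v)) <= 1 / lam).
    { intros v. apply ln_ratio_le; auto. rewrite Hf1, Hf2, !lap_sym.
      set (s := - (theta - Rmax (theta - delta) (a v))).
      set (t := - (theta - Rmax (theta - delta) (a v + (if dom v x then 1 else 0)))).
      assert (Hst : s <= t /\ t - s <= 1).
      { unfold s, t. destruct (dom v x); unfold Rmax;
        destruct (Rle_dec (theta - delta) (a v)), (Rle_dec (theta - delta) (a v + 1)),
                 (Rle_dec (theta - delta) (a v + 0)); lra. }
      eapply Rle_trans. apply (lap_slope lam s t); [auto|apply Hst].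
      apply Rmult_le_compat_l. left; apply lap_bounds; auto.
      apply exp_le_mono. unfold Rdiv. apply Rmult_le_compat_r; [left; apply Rinv_0_lt_compat|]; lra. }
    assert (Nlf : NoDup lf) by (apply NoDup_filter, nodup_leaves, HI).
    assert (Ulf : forall u w, In u lf -> In w lf -> u = w).
    { intros u w Hu Hw. unfold lf in Hu, Hw. apply filter_In in Hu as [Hu Du]. apply filter_In in Hw as [Hw Dw].
      eapply leaf_unique; eauto. }
    rewrite El. destruct (singleton_or_nil lf Nlf Ulf) as [E|[w E]]; rewrite E; simpl.
    + lra.
    + specialize (Hterm w). lra.
Qed.

Theorem corollary1 (Omega : Type) (beta : nat) (dom : node -> Omega -> bool)
  (Hbeta : (2 <= beta)%nat) (Hdom : splitting_scheme Omega beta dom)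
  (eps theta lam delta : R) (Heps : 0 < eps)
  (Hlam : (2 * INR beta - 1) / (INR beta - 1) * / eps <= lam)
  (Hdelta : delta = lam * ln (INR beta)) :
  privtree_DP beta dom lam theta delta eps.
Proof.
  intros D D' [[x Hp]|[x Hp]] I HI.
  - exact (proj2 (core Omega beta dom Hbeta Hdom eps theta lam delta Heps Hlam Hdelta D D' x Hp I HI)).
  - exact (proj1 (core Omega beta dom Hbeta Hdom eps theta lam delta Heps Hlam Hdelta D' D x Hp I HI)).
Qed.
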